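(* Let $\mathcal{G}$ be a finite groupoid and $\mathcal{H}$ a connected wide subgroupoid of $\mathcal{G}$. Then $\mathbb{C}[\mathcal{G}/\mathcal{H}]\cong Y_\mathcal{H}$ as functors $\mathcal{G}\to\mathbf{Vect}_\mathbb{C}$.
   Context: A groupoid is a category in which every morphism is invertible; all groupoids are finite and nonempty; $gg'$ denotes composition. A subgroupoid is wide if it contains all objects, connected if any two of its objects are joined by one of its morphisms. For $x\in\mathcal{G}_0$ let $\mathrm{Mor}_\mathcal{G}(-,x):=\coprod_{y\in\mathcal{G}_0}\mathcal{G}(y,x)$ with equivalence relation $a\sim_{\mathcal{H},x}b\iff a^{-1}b\in\mathcal{H}_1$, class of $a$ written $a\mathcal{H}$. The $\mathcal{G}$-set $\mathcal{G}/\mathcal{H}$ sends $x$ to $\mathrm{Mor}_\mathcal{G}(-,x)/\sim_{\mathcal{H},x}$ and $g:x\to y$ to $a\mathcal{H}\mapsto ga\mathcal{H}$; $\mathbb{C}[\mathcal{G}/\mathcal{H}]$ is its composite with the free complex vector space functor. $Y_\mathcal{H}:\mathcal{G}\to\mathbf{Vect}_\mathbb{C}$ is given by $Y_\mathcal{H}(G):=\{f:\mathrm{Mor}_\mathcal{G}(-,G)\to\mathbb{C}\mid f(gh)=f(g)\text{ for all } g\in\mathrm{Mor}_\mathcal{G}(-,G),\ h\in\mathcal{H}_1,\ \mathrm{dom}\,g=\mathrm{cod}\,h\}$ (pointwise vector space structure) and, for $g:G\to G'$, $Y_\mathcal{H}(g)(f):=f(g^{-1}\,-)$. *)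

(* Defs.v *)
From HB Require Import structures.
From mathcomp Require Import all_boot all_order all_algebra.
From mathcomp Require Import complex.
From mathcomp Require Import Rstruct.
Set Implicit Arguments. Unset Strict Implicit. Unset Printing Implicit Defensive.
Import Order.TTheory GRing.Theory Num.Theory.
Local Open Scope ring_scope.

Definition CC : fieldType := (Rdefinitions.R)[i].

(** A finite nonempty groupoid, presented as a finite set of objects, a finite
    set of morphisms with domain/codomain maps, identities, inverses, and a
    composition [comp g g'] (= g g', "g after g'") that is only constrained
    (and only ever used) when [dom g = cod g']. *)
Record groupoid := Groupoid {
  obj : finType;
  mor : finType;
  dom : mor -> obj;
  cod : mor -> obj;
  idm : obj -> mor;
  comp : mor -> mor -> mor;
  inv : mor -> mor;
  obj_nonempty : (0 < #|obj|)%N;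
  dom_idm : forall x, dom (idm x) = x;
  cod_idm : forall x, cod (idm x) = x;
  dom_comp : forall g h, dom g = cod h -> dom (comp g h) = dom h;
  cod_comp : forall g h, dom g = cod h -> cod (comp g h) = cod g;
  compA : forall f g h, dom f = cod g -> dom g = cod h ->
            comp f (comp g h) = comp (comp f g) h;
  comp1m : forall g, comp (idm (cod g)) g = g;
  compm1 : forall g, comp g (idm (dom g)) = g;
  dom_inv : forall g, dom (inv g) = cod g;
  cod_inv : forall g, cod (inv g) = dom g;
  compVm : forall g, comp (inv g) g = idm (dom g);
  compmV : forall g, comp g (inv g) = idm (cod g)
}.

Section Groupoids.
Variable G : groupoid.
Local Notation O := (obj G).
Local Notation M := (mor G).
Local Notation dom := (@dom G).
Local Notation cod := (@cod G).
Local Notation comp := (@comp G).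
Local Notation inv := (@inv G).
Local Notation idm := (@idm G).

Definition is_subgroupoid (H0 : {set O}) (H1 : {set M}) : Prop :=
  [/\ forall h, h \in H1 -> dom h \in H0 /\ cod h \in H0,
      forall x, x \in H0 -> idm x \in H1,
      forall g h, g \in H1 -> h \in H1 -> dom g = cod h -> comp g h \in H1
    & forall h, h \in H1 -> inv h \in H1].

Definition wide (H0 : {set O}) : Prop := H0 = [set: O].

Definition connected_sub (H0 : {set O}) (H1 : {set M}) : Prop :=
  forall x y, x \in H0 -> y \in H0 ->
    exists h, [/\ h \in H1, dom h = x & cod h = y].

Variable H : {set M}.

Definition MorTo (x : O) := {g : M | cod g == x}.

Definition cls (a : M) : {set M} :=
  [set b | (cod b == cod a) && (comp (inv a) b \in H)].

Definition is_class_at (x : O) (C : {set M}) : bool :=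
  [exists a, (cod a == x) && (C == cls a)].
Definition GmodH (x : O) := {C : {set M} | is_class_at x C}.

(** C[(G/H)(x)] : the free complex vector space on (G/H)(x), as
    (finitely supported = all) functions (G/H)(x) -> C. *)
Definition CGH (x : O) := {ffun GmodH x -> CC}.

(** Left translation of a class by g : the set { g b | b in C }; for C = aH
    this is the class (g a)H. *)
Definition transl (g : M) (C : {set M}) : {set M} := [set comp g b | b in C].

(** C[G/H](g) : C[(G/H)(dom g)] -> C[(G/H)(cod g)], the linear extension of
    aH |-> g a H, i.e. the push-forward of coefficients. *)
Definition CGH_map (g : M) (v : CGH (dom g)) : CGH (cod g) :=
  [ffun D => \sum_(C : GmodH (dom g) | transl g (val C) == val D) v C].

Definition FunTo (x : O) := {ffun MorTo x -> CC}.

Definition inY (x : O) (f : FunTo x) : Prop :=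
  forall (g g' : MorTo x) (h : M), h \in H -> dom (val g) = cod h ->
    val g' = comp (val g) h -> f g' = f g.

(** Extension by zero of f : Mor(-,x) -> C to all morphisms (only evaluated
    on Mor(-,x)). *)
Definition ext (x : O) (f : FunTo x) (m : M) : CC :=
  if insub m is Some k then f k else 0.

Definition Y_map (g : M) (f : FunTo (dom g)) : FunTo (cod g) :=
  [ffun k : MorTo (cod g) => ext f (comp (inv g) (val k))].

Definition nat_iso_CGH_Y (phi : forall x : O, CGH x -> FunTo x) : Prop :=
  [/\ forall x (a : CC) (v w : CGH x),
        phi x [ffun s => a * v s + w s] = [ffun k => a * phi x v k + phi x w k],
      forall x (v : CGH x), inY (phi x v),
      forall x (v w : CGH x), phi x v = phi x w -> v = w,
      forall x (f : FunTo x), inY f -> exists v, phi x v = f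
    & forall (g : M) (v : CGH (dom g)),
        phi (cod g) (CGH_map v) = Y_map (phi (dom g) v)].

End Groupoids.

(* Main.v *)
Require Import Defs.
From mathcomp Require Import all_boot all_order all_algebra.

Set Implicit Arguments. Unset Strict Implicit. Unset Printing Implicit Defensive.
Local Notation comp := Defs.comp.
Local Notation inv := Defs.inv.
Local Notation idm := Defs.idm.
Local Notation dom := Defs.dom.
Local Notation cod := Defs.cod.

Ltac dc := repeat first [ rewrite dom_inv | rewrite cod_inv | rewrite dom_idm
  | rewrite cod_idm | rewrite dom_comp; [|by dc] | rewrite cod_comp; [|by dc] ];
  try congruence.

Lemma inv_uniq (G : groupoid) (g f : mor G) :
  dom g = cod f -> comp g f = idm (dom f) -> g = inv f.
Proof.
move=> e1 e2.
rewrite -[g]compm1 e1 -(compmV f) Defs.compA ?e2; last by dc.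
  by rewrite -(cod_inv f) comp1m.
done.
Qed.

Lemma invK (G : groupoid) (a : mor G) : inv (inv a) = a.
Proof.
symmetry; apply: inv_uniq; first by dc.
by rewrite compmV dom_inv.
Qed.

Lemma invM (G : groupoid) (g a : mor G) :
  dom g = cod a -> inv (comp g a) = comp (inv a) (inv g).
Proof.
move=> e; symmetry; apply: inv_uniq; first by dc.
rewrite -Defs.compA; try by dc.
rewrite (@Defs.compA _ (inv g) g a); try by dc.
by rewrite compVm e comp1m compVm dom_comp.
Qed.

Lemma chain (G : groupoid) (x y z : mor G) : cod x = cod y -> cod y = cod z ->
  comp (comp (inv x) y) (comp (inv y) z) = comp (inv x) z.
Proof.
move=> e1 e2.
rewrite -Defs.compA; try by dc.
rewrite (@Defs.compA _ y (inv y) z); try by dc.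
by rewrite compmV e2 comp1m.
Qed.

Lemma cancelL (G : groupoid) (g a : mor G) : dom g = cod a ->
  comp (inv g) (comp g a) = a.
Proof.
move=> e; rewrite Defs.compA; try by dc.
by rewrite compVm e comp1m.
Qed.

Lemma cancelR (G : groupoid) (g k : mor G) : cod k = cod g ->
  comp g (comp (inv g) k) = k.
Proof.
move=> e; rewrite Defs.compA; try by dc.
by rewrite compmV -e comp1m.
Qed.

Lemma inclsP (G : groupoid) (H1 : {set mor G}) (a b : mor G) :
  reflect (cod b = cod a /\ comp (inv a) b \in H1) (b \in cls H1 a).
Proof.
rewrite inE; apply: (iffP andP) => [[/eqP -> ->]|[-> ->]] //; split=> //.
Qed.

Lemma cls_refl (G : groupoid) (H1 : {set mor G}) a :
  (forall x, idm x \in H1) -> a \in cls H1 a.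
Proof. by move=> Hid; apply/inclsP; rewrite compVm. Qed.

Lemma cls_eq (G : groupoid) (H1 : {set mor G}) (a b : mor G) :
  (forall g h, g \in H1 -> h \in H1 -> dom g = cod h -> comp g h \in H1) ->
  (forall h, h \in H1 -> inv h \in H1) ->
  b \in cls H1 a -> cls H1 b = cls H1 a.
Proof.
move=> HM HV /inclsP [eb hb]; apply/setP=> c; apply/inclsP/inclsP=> [[ec hc]|[ec hc]].
  split; first congruence.
  rewrite -(@chain _ a b c) //; try congruence.
  by apply: HM => //; dc.
have ec' : cod c = cod b by congruence.
split=> //.
rewrite -(@chain _ b a c) //; try congruence.
apply: HM => //; last by dc.
have -> : comp (inv b) a = inv (comp (inv a) b).
  by rewrite invM ?invK //; dc.
exact: HV.
Qed.

Lemma transl_cls (G : groupoid) (H1 : {set mor G}) (g a : mor G) :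
  dom g = cod a -> transl g (cls H1 a) = cls H1 (comp g a).
Proof.
move=> e; apply/setP=> c; apply/imsetP/inclsP.
  case=> b /inclsP [eb hb] ->; split; first by dc.
  rewrite invM // -Defs.compA; try by dc.
  by rewrite cancelL //; congruence.
case=> ec hc; have ec' : cod c = cod g by rewrite ec; dc.
exists (comp (inv g) c); last by rewrite cancelR.
apply/inclsP; split; first by dc.
rewrite Defs.compA; try by dc.
by rewrite -invM.
Qed.

Lemma clsofP (G : groupoid) (H1 : {set mor G}) (x : obj G) (k : MorTo x) :
  is_class_at H1 x (cls H1 (val k)).
Proof. by apply/existsP; exists (val k); rewrite (valP k) eqxx. Qed.

Definition clsof (G : groupoid) (H1 : {set mor G}) (x : obj G) (k : MorTo x) :
  GmodH H1 x := exist _ (cls H1 (val k)) (clsofP H1 k).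

Lemma extE (G : groupoid) (x : obj G) (f : FunTo x) (k : MorTo x) m :
  m = val k -> ext f m = f k.
Proof.
move=> ->; rewrite /ext; case: insubP => [u _ eu|].
  by congr (f _); apply: val_inj.
by rewrite (valP k).
Qed.

Theorem theorem5p3 (G : groupoid) (H0 : {set obj G}) (H1 : {set mor G}) :
  is_subgroupoid H0 H1 -> wide H0 -> connected_sub H0 H1 ->
  exists phi : forall x : obj G, CGH H1 x -> FunTo x, nat_iso_CGH_Y phi.
Proof.
case=> _ Hid0 HM HV Hw _.
have Hid : forall x, idm x \in H1 by move=> x; apply: Hid0; rewrite Hw inE.
exists (fun x (v : CGH H1 x) => [ffun k => v (clsof H1 k)] : FunTo x).
split.
- by move=> x a v w; apply/ffunP=> k; rewrite !ffunE.
- move=> x v g g' h hH e e'; rewrite !ffunE; congr (v _); apply: val_inj => /=.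
  rewrite e'; apply: cls_eq => //; apply/inclsP; split; first by dc.
  by rewrite cancelL.
- move=> x v w /ffunP E; apply/ffunP => C.
  have [a /andP[ea /eqP eC]] := existsP (valP C).
  have -> : C = clsof H1 (Sub a ea : MorTo x) by apply: val_inj; rewrite /= eC.
  by move: (E (Sub a ea)); rewrite !ffunE.
- move=> x f Yf.
  have rep : forall C : GmodH H1 x, {k : MorTo x | clsof H1 k = C}.
    move=> C; have /sigW [a /andP[ea /eqP eC]] := existsP (valP C).
    by exists (Sub a ea); apply: val_inj; rewrite /= eC.
  exists [ffun C => f (sval (rep C))]; apply/ffunP=> k; rewrite !ffunE.
  case: (rep (clsof H1 k)) => k' /= /(congr1 val) /= ek.
  have : val k \in cls H1 (val k') by rewrite ek; apply: cls_refl.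
  case/inclsP=> ec hc.
  symmetry; apply: (Yf k' k (comp (inv (val k')) (val k))) => //; first by dc.
  by rewrite cancelR.
- move=> g v; apply/ffunP=> k; rewrite !ffunE.
  have ek0 : cod (comp (inv g) (val k)) == dom g.
    by apply/eqP; have /eqP ek := valP k; dc.
  pose k0 : MorTo (dom g) := Sub (comp (inv g) (val k)) ek0.
  rewrite (@extE _ _ _ k0) // ffunE.
  rewrite (big_pred1 (clsof H1 k0)) // => C /=.
  have [a /andP[/eqP ea /eqP eC]] := existsP (valP C).
  have /eqP ek := valP k.
  apply/eqP/eqP => [E|->] /=; last by rewrite transl_cls ?cancelR //; dc.
  apply: val_inj; rewrite /= eC; move: E; rewrite eC transl_cls // => E.
  rewrite -[in LHS](@cancelL _ g a) // -transl_cls ?E ?transl_cls //; dc.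
by case: k {ek0 k0 E} ek => k /= /eqP ->.
Qed.
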